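(* Let $\mathbb{K}$ be a field of characteristic $0$. Suppose $\mathcal{A}$ is a $2n$-dimensional Poincaré CDGA over $\mathbb{K}$ with trivial differential, and let $\omega\in\mathcal{A}^{2n}$ be the dual of the Poincaré class. Assume that $\mathcal{A}^i=0$ whenever $i<0$ or $i$ is odd, and that $\mathcal{A}^0=\mathbb{K}$. Let $\theta$ be a new element of degree $2n-1$ and $\mathcal{A}_\theta=\mathcal{A}\otimes\Lambda\theta$ with $d\theta=\omega$. If $\mathcal{A}_\theta$ is formal, then the multiplication map $\mathcal{A}^i\otimes\mathcal{A}^j\to\mathcal{A}^{i+j}$ is injective for all $i,j\le n$.
   Context: A finite-dimensional graded commutative algebra $H$ is $n$-dimensional Poincaré if there exists $\alpha_H\in(H^n)^\vee$ (the Poincaré class) such that $H^i\to(H^{n-i})^\vee$, $x\mapsto(y\mapsto\alpha_H(xy))$, is an isomorphism for all $i$; a CDGA is Poincaré if its cohomology is. The dual of the Poincaré class is the top-degree element $\omega$ with $\alpha_H(\omega)=1$. $\mathcal{A}_\theta=\{x+\theta y:x,y\in\mathcal{A}\}$ ($\theta^2=0$). A CDGA is formal if it is connected to its cohomology by a zigzag of quasi-isomorphisms. *)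

(* Defs.v *)
From HB Require Import structures.
From mathcomp Require Import all_boot all_order all_algebra.
Set Implicit Arguments. Unset Strict Implicit. Unset Printing Implicit Defensive.
Import Order.TTheory GRing.Theory Num.Theory.
Local Open Scope ring_scope.

(* The total space is a K-vector space [carrier]; the grading is given by
   the family of projections [proj i] onto the degree-i components. *)
Record cdga_data (K : fieldType) := CdgaData {
  carrier :> lmodType K;
  cmul : carrier -> carrier -> carrier;
  cone : carrier;
  proj : int -> carrier -> carrier;
  cd : carrier -> carrier
}.

Arguments cmul {K} _ _ _.
Arguments cone {K} _.
Arguments proj {K} _ _ _.
Arguments cd {K} _ _.

Section CDGA.
Variable K : fieldType.

Definition homog (A : cdga_data K) (i : int) (x : A) := proj A i x = x.

Definition lin_map (U V : lmodType K) (f : U -> V) :=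
  forall (a : K) (x y : U), f (a *: x + y) = a *: f x + f y.

Definition lin_functional (U : lmodType K) (f : U -> K) :=
  forall (a : K) (x y : U), f (a *: x + y) = a * f x + f y.

Definition gsign (i j : int) : K := (-1) ^+ (absz (i * j)).

Definition is_cdga (A : cdga_data K) : Prop :=
  [/\
      [/\ (forall i, lin_map (proj A i)),
          (forall i j x, proj A i (proj A j x) = if i == j then proj A j x else 0)
        & (forall x : A, exists2 s : seq int, uniq s & x = \sum_(i <- s) proj A i x)],
      [/\ (forall a x y z, cmul A (a *: x + y) z = a *: cmul A x z + cmul A y z)
          /\ (forall a x y z, cmul A z (a *: x + y) = a *: cmul A z x + cmul A z y),
          (forall x y z, cmul A (cmul A x y) z = cmul A x (cmul A y z)),
          (forall x, cmul A (cone A) x = x /\ cmul A x (cone A) = x),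
          homog 0 (cone A)
        & (forall i j x y, homog i x -> homog j y -> homog (i + j) (cmul A x y))
          /\
          (forall i j x y, homog i x -> homog j y ->
             cmul A x y = gsign i j *: cmul A y x)]
    &
      [/\ lin_map (cd A),
          (forall i x, homog i x -> homog (i + 1) (cd A x)),
          (forall x, cd A (cd A x) = 0)
        & (forall i x y, homog i x ->
             cd A (cmul A x y) = cmul A (cd A x) y + gsign i 1 *: cmul A x (cd A y))]].

Definition is_cdga_morph (A B : cdga_data K) (f : A -> B) : Prop :=
  [/\ lin_map f, f (cone A) = cone B,
      (forall x y, f (cmul A x y) = cmul B (f x) (f y)),
      (forall i x, f (proj A i x) = proj B i (f x))
    & (forall x, f (cd A x) = cd B (f x))].

(* f induces an isomorphism H^i(A) -> H^i(B) in every degree i. *)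
Definition is_quasi_iso (A B : cdga_data K) (f : A -> B) : Prop :=
  [/\ is_cdga A, is_cdga B, is_cdga_morph f,
      (forall i (z : B), homog i z -> cd B z = 0 ->
         exists w : A, exists b : B,
           [/\ homog i w, cd A w = 0, homog (i - 1) b & f w - z = cd B b])
    &
      (forall i (w : A) (b : B), homog i w -> cd A w = 0 -> homog (i - 1) b ->
         f w = cd B b -> exists a : A, homog (i - 1) a /\ w = cd A a)].

Inductive zigzag : cdga_data K -> cdga_data K -> Prop :=
| zz_refl A : zigzag A A
| zz_fwd (A B C : cdga_data K) (f : A -> B) :
    is_quasi_iso f -> zigzag B C -> zigzag A C
| zz_bwd (A B C : cdga_data K) (f : B -> A) :
    is_quasi_iso f -> zigzag B C -> zigzag A C.

(* Formality: A is connected by a zigzag of quasi-isomorphisms to a CDGA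
   with zero differential (which is then necessarily isomorphic to H(A)). *)
Definition formal (A : cdga_data K) : Prop :=
  exists H : cdga_data K,
    [/\ is_cdga H, (forall x, cd H x = 0) & zigzag A H].

Definition finite_dim (A : cdga_data K) : Prop :=
  exists s : seq A, forall x : A,
    exists c : nat -> K, x = \sum_(k < size s) c k *: s`_k.

(* A (a graded algebra, here equal to its cohomology) is N-dimensional
   Poincare with Poincare class alpha. *)
Definition poincare (A : cdga_data K) (N : int) (alpha : A -> K) : Prop :=
  [/\ finite_dim A, lin_functional alpha &
      forall i : int,
        (forall x : A, homog i x ->
           (forall y : A, homog (N - i) y -> alpha (cmul A x y) = 0) -> x = 0)
        /\ (forall phi : A -> K, lin_functional phi ->
              exists2 x : A, homog i x &
                forall y : A, homog (N - i) y -> phi y = alpha (cmul A x y))].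

(* A_theta = A (x) Lambda(theta), |theta| = 2n-1, d theta = omega.
   Element (x, y) stands for x + theta y.  Since A is concentrated in even
   degrees (standing hypothesis), theta commutes with A and theta^2 = 0. *)
Definition Atheta_data (A : cdga_data K) (n : nat) (omega : A) : cdga_data K :=
  @CdgaData K ((A : lmodType K) * (A : lmodType K))%type
    (fun u v => (cmul A u.1 v.1, cmul A u.1 v.2 + cmul A u.2 v.1))
    (cone A, 0)
    (fun k u => (proj A k u.1, proj A (k - ((2 * n)%:Z - 1)) u.2))
    (fun u => (cd A u.1 + cmul A omega u.2, - cd A u.2)).

Definition deg_basis (A : cdga_data K) (i : int) (p : nat) (e : 'I_p -> A) :=
  [/\ forall k, homog i (e k),
      forall c : 'I_p -> K, \sum_k c k *: e k = 0 -> forall k, c k = 0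
    & forall x : A, homog i x -> exists c : 'I_p -> K, x = \sum_k c k *: e k].

(* The multiplication map A^i (x) A^j -> A^{i+j} is injective; an element of
   A^i (x) A^j is written in coordinates M w.r.t. bases e of A^i, f of A^j. *)
Definition mul_tensor_injective (A : cdga_data K) (i j : int) : Prop :=
  forall (p q : nat) (e : 'I_p -> A) (f : 'I_q -> A),
    deg_basis i e -> deg_basis j f ->
    forall M : 'M[K]_(p, q),
      \sum_k \sum_l M k l *: cmul A (e k) (f l) = 0 -> M = 0.

End CDGA.

Arguments poincare {K} A N alpha.
Arguments Atheta_data {K} A n omega.
Arguments formal {K} A.
Arguments mul_tensor_injective {K} A i j.
Arguments is_cdga {K} A.

(* Main.v *)
Require Import Defs.
From HB Require Import structures.
From mathcomp Require Import all_boot all_order all_algebra.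
From mathcomp Require Import ring lra zify.
From Stdlib Require Import Classical ClassicalEpsilon FunctionalExtensionality.
Import Order.TTheory GRing.Theory Num.Theory.
Local Open Scope ring_scope.
Set Implicit Arguments. Unset Strict Implicit. Unset Printing Implicit Defensive.
Section Signs.
Variable K : fieldType.

Lemma gsign_exprz (i : int) : gsign K i 1 = (-1) ^ i.
Proof.
rewrite /gsign mulr1; case: i => n //=.
by rewrite NegzE -exprnN invr_sign.
Qed.

Lemma gsignD (i j : int) : gsign K (i + j) 1 = gsign K i 1 * gsign K j 1.
Proof. by rewrite !gsign_exprz exprzDr // unitrN1. Qed.

Lemma gsignN1 : gsign K (-1) 1 = -1.
Proof. by rewrite /gsign mulr1 /= expr1. Qed.

Lemma gsignB1 (i : int) : gsign K (i - 1) 1 = - gsign K i 1.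
Proof. by rewrite gsignD gsignN1 mulrN1. Qed.

Lemma gsignN (i : int) : gsign K (- i) 1 = gsign K i 1.
Proof. by rewrite /gsign !mulr1 abszN. Qed.

Lemma gsign_sq (i : int) : gsign K i 1 * gsign K i 1 = 1.
Proof. by rewrite -{2}gsignN -gsignD subrr. Qed.
End Signs.
Section Lin.
Variables (K : fieldType) (U V : lmodType K) (f : U -> V) (hf : lin_map f).

Lemma lin0 : f 0 = 0.
Proof.
have := hf 1 0 0; rewrite !scale1r !addr0 => /(congr1 (fun t => t - f 0)).
by rewrite subrr addrK => <-.
Qed.

Lemma linD x y : f (x + y) = f x + f y.
Proof. by have := hf 1 x y; rewrite !scale1r. Qed.

Lemma linZ a x : f (a *: x) = a *: f x.
Proof. by have := hf a x 0; rewrite !addr0 lin0 addr0. Qed.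

Lemma linN x : f (- x) = - f x.
Proof. by rewrite -scaleN1r linZ scaleN1r. Qed.

Lemma linB x y : f (x - y) = f x - f y.
Proof. by rewrite linD linN. Qed.

Lemma lin_sum (I : Type) (r : seq I) (P : pred I) (F : I -> U) :
  f (\sum_(i <- r | P i) F i) = \sum_(i <- r | P i) f (F i).
Proof. exact: (big_morph f linD lin0). Qed.
End Lin.

Section Basic.
Variables (K : fieldType) (C : cdga_data K) (HC : is_cdga C).

Lemma proj_lin i : lin_map (proj C i).
Proof. by case: HC => [[]]. Qed.
Lemma cd_lin : lin_map (cd C).
Proof. by case: HC => _ _ []. Qed.
Lemma cmul_linl z : lin_map (fun x => cmul C x z).
Proof. by case: HC => _ [[H1 H2]] _ _ _ _ _ a x y; apply: H1. Qed.
Lemma cmul_linr z : lin_map (fun x => cmul C z x).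
Proof. by case: HC => _ [[H1 H2]] _ _ _ _ _ a x y; apply: H2. Qed.
Lemma cmulA x y z : cmul C (cmul C x y) z = cmul C x (cmul C y z).
Proof. by case: HC => _ [_ H] _. Qed.
Lemma cdd x : cd C (cd C x) = 0.
Proof. by case: HC => _ _ []. Qed.
Lemma homogM i j (x y : C) : homog i x -> homog j y -> homog (i + j) (cmul C x y).
Proof. by case: HC => _ [_ _ _ _ [H _]] _; apply: H. Qed.
Lemma cd_homog i (x : C) : homog i x -> homog (i + 1) (cd C x).
Proof. by case: HC => _ _ [_ H _ _]; apply: H. Qed.
Lemma leibniz i (x y : C) : homog i x ->
  cd C (cmul C x y) = cmul C (cd C x) y + gsign K i 1 *: cmul C x (cd C y).
Proof. by case: HC => _ _ [_ _ _ H]; apply: H. Qed.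

Lemma cmul0l z : cmul C 0 z = 0. Proof. exact: (lin0 (cmul_linl z)). Qed.
Lemma cmul0r z : cmul C z 0 = 0. Proof. exact: (lin0 (cmul_linr z)). Qed.
Lemma cmulDl x y z : cmul C (x + y) z = cmul C x z + cmul C y z.
Proof. exact: (linD (cmul_linl z)). Qed.
Lemma cmulDr x y z : cmul C z (x + y) = cmul C z x + cmul C z y.
Proof. exact: (linD (cmul_linr z)). Qed.
Lemma cmulBl x y z : cmul C (x - y) z = cmul C x z - cmul C y z.
Proof. exact: (linB (cmul_linl z)). Qed.
Lemma cmulBr x y z : cmul C z (x - y) = cmul C z x - cmul C z y.
Proof. exact: (linB (cmul_linr z)). Qed.
Lemma cmulZl a x z : cmul C (a *: x) z = a *: cmul C x z.
Proof. exact: (linZ (cmul_linl z)). Qed.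
Lemma cmulZr a x z : cmul C z (a *: x) = a *: cmul C z x.
Proof. exact: (linZ (cmul_linr z)). Qed.
Lemma cmul_suml (I : Type) (r : seq I) (P : pred I) (F : I -> C) z :
  cmul C (\sum_(i <- r | P i) F i) z = \sum_(i <- r | P i) cmul C (F i) z.
Proof. exact: (lin_sum (cmul_linl z)). Qed.
Lemma cmul_sumr (I : Type) (r : seq I) (P : pred I) (F : I -> C) z :
  cmul C z (\sum_(i <- r | P i) F i) = \sum_(i <- r | P i) cmul C z (F i).
Proof. exact: (lin_sum (cmul_linr z)). Qed.
Lemma cd0 : cd C 0 = 0. Proof. exact: (lin0 cd_lin). Qed.
Lemma cdD x y : cd C (x + y) = cd C x + cd C y. Proof. exact: (linD cd_lin). Qed.
Lemma cdB x y : cd C (x - y) = cd C x - cd C y. Proof. exact: (linB cd_lin). Qed.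
Lemma cdZ a x : cd C (a *: x) = a *: cd C x. Proof. exact: (linZ cd_lin). Qed.
Lemma cd_sum (I : Type) (r : seq I) (P : pred I) (F : I -> C) :
  cd C (\sum_(i <- r | P i) F i) = \sum_(i <- r | P i) cd C (F i).
Proof. exact: (lin_sum cd_lin). Qed.

Lemma homog0 i : homog i (0 : C).
Proof. exact: (lin0 (proj_lin i)). Qed.
Lemma homogD i (x y : C) : homog i x -> homog i y -> homog i (x + y).
Proof. by rewrite /homog (linD (proj_lin i)) => -> ->. Qed.
Lemma homogB i (x y : C) : homog i x -> homog i y -> homog i (x - y).
Proof. by rewrite /homog (linB (proj_lin i)) => -> ->. Qed.
Lemma homogZ i a (x : C) : homog i x -> homog i (a *: x).
Proof. by rewrite /homog (linZ (proj_lin i)) => ->. Qed.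
Lemma homog_sum i (I : Type) (r : seq I) (P : pred I) (F : I -> C) :
  (forall k, homog i (F k)) -> homog i (\sum_(k <- r | P k) F k).
Proof.
move=> H; elim/big_rec: _ => [|k x _ Hx]; first exact: homog0.
exact: homogD.
Qed.
Lemma homog_eq i i' (x : C) : i = i' -> homog i x -> homog i' x.
Proof. by move=> ->. Qed.
End Basic.

Lemma zid1 (V : zmodType) (A D X Y : V) : A - (X - Y) = A + D - X - (D - Y).
Proof. by rewrite opprB -!addrA; congr (_ + _); rewrite opprB addrCA [Y - D]addrC addNKr addrC. Qed.

Lemma zid3 (V : zmodType) (A X Y W : V) : A - Y - X = A - (X + W) - (Y - W).
Proof. by rewrite opprD opprB -!addrA addKr [- X + _]addrC. Qed.

Lemma zid4 (V : zmodType) (U x y : V) : x + y = U + (y - (U - x)).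
Proof. by rewrite opprB addrCA [U + _]addrC subrK addrC. Qed.

Lemma zid5 (V : zmodType) (A B X Y : V) : A + B - (X + Y) = A - X + B - Y.
Proof. by rewrite opprD addrACA -!addrA; congr (_ + _); rewrite addrCA. Qed.
Section Massey.
Variable K : fieldType.
Implicit Types C : cdga_data K.

Definition exactd C (k : int) (x : C) := exists z : C, homog (k - 1) z /\ x = cd C z.
Definition cocyc C (k : int) (x : C) := homog k x /\ cd C x = 0.
Definition defsys C (i j m : int) p (a b : 'I_p -> C) (c u : C) (v : 'I_p -> C) :=
  [/\ homog (i + j - 1) u, cd C u = \sum_k cmul C (a k) (b k),
      (forall k, homog (j + m - 1) (v k)) & (forall k, cd C (v k) = cmul C (b k) c)].
Definition mval C (i : int) p (a : 'I_p -> C) (c u : C) (v : 'I_p -> C) :=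
  \sum_k cmul C (a k) (v k) - gsign K i 1 *: cmul C u c.
Definition vanish C (i j m : int) p (a b : 'I_p -> C) (c : C) :=
  exists u v, defsys i j m a b c u v /\ exactd (i + j + m - 1) (mval i a c u v).
Definition Qmas C (i j m : int) p :=
  exists (a b : 'I_p -> C) (c : C),
    [/\ (forall k, cocyc i (a k)), (forall k, cocyc j (b k)), cocyc m c,
        exactd (i + j) (\sum_k cmul C (a k) (b k))
      & (forall k, exactd (j + m) (cmul C (b k) c))] /\ ~ vanish i j m a b c.

Section RC.
Variables (C : cdga_data K) (HC : is_cdga C).

Lemma homogM' (i j k : int) (x y : C) :
  homog i x -> homog j y -> i + j = k -> homog k (cmul C x y).
Proof. by move=> hx hy <-; exact (homogM HC hx hy). Qed.

Lemma rc_a (i j m : int) p (a b al : 'I_p -> C) (c : C) :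
  (forall k, cd C (b k) = 0) -> (forall k, homog j (b k)) ->
  (forall k, homog (i - 1) (al k)) ->
  vanish i j m (fun k => a k + cd C (al k)) b c -> vanish i j m a b c.
Proof.
move=> db hb hal [U [V [[hU dU hV dV] [z [hz ez]]]]].
have dab k : cd C (cmul C (al k) (b k)) = cmul C (cd C (al k)) (b k).
  by rewrite (leibniz HC _ (hal k)) db (cmul0r HC) scaler0 addr0.
have daV k : cd C (cmul C (al k) (V k)) =
    cmul C (cd C (al k)) (V k) - gsign K i 1 *: cmul C (al k) (cmul C (b k) c).
  by rewrite (leibniz HC _ (hal k)) dV gsignB1 scaleNr.
exists (U - \sum_k cmul C (al k) (b k)), V; split; first split => //.
- apply: (homogB HC hU); apply: (homog_sum HC) => k.
  apply: homogM' (hal k) (hb k) _; ring.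
- rewrite (cdB HC) dU (cd_sum HC).
  by rewrite -sumrB; apply: eq_bigr => k _; rewrite dab (cmulDl HC) addrK.
  exists (z - \sum_k cmul C (al k) (V k)); split.
    apply: (homogB HC hz); apply: (homog_sum HC) => k.
    apply: homogM' (hal k) (hV k) _; ring.
  rewrite (cdB HC) -ez (cd_sum HC) (eq_bigr _ (fun k _ => daV k)).
  rewrite /mval (cmulBl HC) (cmul_suml HC) scalerBr sumrB.
  rewrite scaler_sumr.
  have -> : \sum_k cmul C (a k + cd C (al k)) (V k) =
      \sum_k cmul C (a k) (V k) + \sum_k cmul C (cd C (al k)) (V k).
    by rewrite -big_split; apply: eq_bigr => k _; rewrite (cmulDl HC).
  have -> : \sum_(k < p) gsign K i 1 *: cmul C (al k) (cmul C (b k) c) =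
      \sum_k gsign K i 1 *: cmul C (cmul C (al k) (b k)) c.
    by apply: eq_bigr => k _; rewrite (cmulA HC).
  exact: zid1.
Qed.

Lemma rc_b (i j m : int) p (a b be : 'I_p -> C) (c : C) :
  (forall k, cocyc i (a k)) -> cd C c = 0 -> (forall k, homog (j - 1) (be k)) ->
  homog m c ->
  vanish i j m a (fun k => b k + cd C (be k)) c -> vanish i j m a b c.
Proof.
move=> ha dc hbe hc [U [V [[hU dU hV dV] [z [hz ez]]]]].
set s := gsign K i 1.
have dab k : cd C (cmul C (a k) (be k)) = s *: cmul C (a k) (cd C (be k)).
  by rewrite (leibniz HC _ (proj1 (ha k))) (proj2 (ha k)) (cmul0l HC) add0r.
have dbc k : cd C (cmul C (be k) c) = cmul C (cd C (be k)) c.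
  by rewrite (leibniz HC _ (hbe k)) dc (cmul0r HC) scaler0 addr0.
exists (U - s *: \sum_k cmul C (a k) (be k)), (fun k => V k - cmul C (be k) c).
split; first split.
- apply: (homogB HC hU); apply: (homogZ HC); apply: (homog_sum HC) => k.
  apply: homogM' (proj1 (ha k)) (hbe k) _; ring.
- rewrite (cdB HC) dU (cdZ HC) (cd_sum HC) (eq_bigr _ (fun k _ => dab k)).
  rewrite -scaler_sumr scalerA gsign_sq scale1r -sumrB; apply: eq_bigr => k _.
  by rewrite (cmulDr HC) addrK.
- move=> k; apply: (homogB HC (hV k)); apply: homogM' (hbe k) hc _; ring.
- by move=> k; rewrite (cdB HC) dV dbc (cmulDl HC) addrK.
exists z; split => //; rewrite -ez /mval /s.
rewrite (cmulBl HC) (cmulZl HC) (cmul_suml HC) scalerBr scalerA gsign_sq scale1r.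
under eq_bigr do rewrite (cmulBr HC).
rewrite sumrB.
have -> : \sum_k cmul C (cmul C (a k) (be k)) c = \sum_k cmul C (a k) (cmul C (be k) c).
  by apply: eq_bigr => k _; rewrite (cmulA HC).
by rewrite opprB addrA subrK.
Qed.

Lemma gsign_key (i j : int) : gsign K j 1 * gsign K (i + j - 1) 1 = - gsign K i 1.
Proof.
rewrite gsignB1 gsignD mulrN mulrA [gsign K j 1 * _]mulrC -mulrA gsign_sq mulr1.
by [].
Qed.

Lemma rc_c (i j m : int) p (a b : 'I_p -> C) (c ga : C) :
  (forall k, cocyc i (a k)) -> (forall k, cocyc j (b k)) -> homog (m - 1) ga ->
  vanish i j m a b (c + cd C ga) -> vanish i j m a b c.
Proof.
move=> ha hb hga [U [V [[hU dU hV dV] [z [hz ez]]]]].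
set s := gsign K i 1; set sj := gsign K j 1.
have dbg k : cd C (cmul C (b k) ga) = sj *: cmul C (b k) (cd C ga).
  by rewrite (leibniz HC _ (proj1 (hb k))) (proj2 (hb k)) (cmul0l HC) add0r.
have dUg : cd C (cmul C U ga) = cmul C (\sum_k cmul C (a k) (b k)) ga +
   gsign K (i + j - 1) 1 *: cmul C U (cd C ga).
  by rewrite (leibniz HC _ hU) dU.
exists U, (fun k => V k - sj *: cmul C (b k) ga).
split; first split => //.
- move=> k; apply: (homogB HC (hV k)); apply: (homogZ HC).
  apply: homogM' (proj1 (hb k)) hga _; ring.
- move=> k; rewrite (cdB HC) dV (cdZ HC) dbg scalerA /sj gsign_sq scale1r.
  by rewrite (cmulDr HC) addrK.
exists (z - sj *: cmul C U ga); split.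
  apply: (homogB HC hz); apply: (homogZ HC); apply: homogM' hU hga _; ring.
rewrite (cdB HC) -ez (cdZ HC) dUg /mval.
rewrite scalerDr scalerA /sj gsign_key scaleNr (cmulDr HC) scalerDr (cmul_suml HC).
have -> : \sum_k cmul C (a k) (V k - gsign K j 1 *: cmul C (b k) ga) =
   \sum_k cmul C (a k) (V k) - gsign K j 1 *: \sum_k cmul C (cmul C (a k) (b k)) ga.
  rewrite scaler_sumr -sumrB; apply: eq_bigr => k _.
  by rewrite (cmulBr HC) (cmulZr HC) (cmulA HC).
exact: zid3.
Qed.

Lemma cocycD1 (i : int) (x al : C) : cocyc i x -> homog (i - 1) al -> cocyc i (x + cd C al).
Proof.
move=> [hx dx] hal; split.
  apply: (homogD HC hx); apply: homog_eq (cd_homog HC hal); ring.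
by rewrite (cdD HC) dx (cdd HC) addr0.
Qed.

Lemma rc (i j m : int) p (a b al be : 'I_p -> C) (c ga : C) :
  (forall k, cocyc i (a k)) -> (forall k, cocyc j (b k)) -> cocyc m c ->
  (forall k, homog (i - 1) (al k)) -> (forall k, homog (j - 1) (be k)) ->
  homog (m - 1) ga ->
  vanish i j m (fun k => a k + cd C (al k)) (fun k => b k + cd C (be k)) (c + cd C ga) ->
  vanish i j m a b c.
Proof.
move=> ha hb hc hal hbe hga H.
apply: (rc_a (fun k => proj2 (hb k)) (fun k => proj1 (hb k)) hal).
apply: (rc_b _ (proj2 hc) hbe (proj1 hc)).
  by move=> k; apply: cocycD1.
apply: (rc_c _ _ hga H).
  by move=> k; apply: cocycD1.
by move=> k; apply: cocycD1.
Qed.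

Lemma mval_cocyc (i j m : int) p (a b v : 'I_p -> C) (c u : C) :
  (forall k, cocyc i (a k)) -> (forall k, cocyc j (b k)) -> cocyc m c ->
  defsys i j m a b c u v -> cocyc (i + j + m - 1) (mval i a c u v).
Proof.
move=> ha hb [hc dc] [hU dU hV dV]; split.
  apply: homogB HC _ _ _ _ _.
    apply: (homog_sum HC) => k; apply: homogM' (proj1 (ha k)) (hV k) _; ring.
  apply: (homogZ HC); apply: homogM' hU hc _; ring.
rewrite /mval (cdB HC) (cdZ HC) (cd_sum HC) (leibniz HC _ hU) dc (cmul0r HC) scaler0 addr0.
rewrite dU (cmul_suml HC) scaler_sumr -sumrB; apply: big1 => k _.
by rewrite (leibniz HC _ (proj1 (ha k))) (proj2 (ha k)) (cmul0l HC) add0r dV (cmulA HC) subrr.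
Qed.

Lemma prod_rep (p : int) (x0 al y0 be : C) :
  homog p x0 -> cd C x0 = 0 -> homog (p - 1) al -> cd C y0 = 0 ->
  cmul C (x0 + cd C al) (y0 + cd C be) =
  cmul C x0 y0 + cd C (cmul C al (y0 + cd C be) + gsign K p 1 *: cmul C x0 be).
Proof.
move=> hx dx hal dy.
rewrite (cdD HC) (leibniz HC _ hal) (cdD HC) dy (cdd HC) addr0 (cmul0r HC) scaler0 addr0.
rewrite (cdZ HC) (leibniz HC _ hx) dx (cmul0l HC) add0r scalerA gsign_sq scale1r.
rewrite (cmulDl HC) (cmulDr HC) [cmul C (cd C al) _ + _]addrC addrA.
by rewrite (cmulDr HC).
Qed.
End RC.

Lemma fchoice (p : nat) (T : Type) (P : 'I_p -> T -> Prop) :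
  (forall k, exists x, P k x) -> exists g : 'I_p -> T, forall k, P k (g k).
Proof.
move=> H; exists (fun k => proj1_sig (constructive_indefinite_description _ (H k))).
by move=> k; exact: proj2_sig.
Qed.

Section Morph.
Variables (C D : cdga_data K) (f : C -> D) (Hf : is_cdga_morph f).
Lemma f_lin : lin_map f. Proof. by case: Hf. Qed.
Lemma fmul x y : f (cmul C x y) = cmul D (f x) (f y). Proof. by case: Hf. Qed.
Lemma fcd x : f (cd C x) = cd D (f x). Proof. by case: Hf. Qed.
Lemma fhomog i x : homog i x -> homog i (f x).
Proof. by case: Hf => _ _ _ H _; rewrite /homog -H => ->. Qed.
Lemma fB x y : f (x - y) = f x - f y. Proof. exact: (linB f_lin). Qed.
Lemma fD x y : f (x + y) = f x + f y. Proof. exact: (linD f_lin). Qed.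
Lemma fZ a x : f (a *: x) = a *: f x. Proof. exact: (linZ f_lin). Qed.
Lemma f0 : f 0 = 0. Proof. exact: (lin0 f_lin). Qed.
Lemma f_sum (I : Type) (r : seq I) (P : pred I) (F : I -> C) :
  f (\sum_(i <- r | P i) F i) = \sum_(i <- r | P i) f (F i).
Proof. exact: (lin_sum f_lin). Qed.

Lemma f_mval (i : int) p (a v : 'I_p -> C) (c u : C) :
  f (mval i a c u v) = mval i (fun k => f (a k)) (f c) (f u) (fun k => f (v k)).
Proof.
rewrite /mval fB fZ fmul f_sum; congr (_ - _); apply: eq_bigr => k _; exact: fmul.
Qed.

Lemma f_defsys (i j m : int) p (a b v : 'I_p -> C) (c u : C) :
  defsys i j m a b c u v ->
  defsys i j m (fun k => f (a k)) (fun k => f (b k)) (f c) (f u) (fun k => f (v k)).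
Proof.
move=> [hU dU hV dV]; split.
- exact: fhomog.
- by rewrite -fcd dU f_sum; apply: eq_bigr => k _; exact: fmul.
- by move=> k; apply: fhomog.
- by move=> k; rewrite -fcd dV fmul.
Qed.

Lemma f_cocyc i x : cocyc i x -> cocyc i (f x).
Proof. by move=> [hx dx]; split; [exact: fhomog | rewrite -fcd dx f0]. Qed.

Lemma f_exactd i x : exactd i x -> exactd i (f x).
Proof. by move=> [z [hz ->]]; exists (f z); split; [exact: fhomog | rewrite fcd]. Qed.
End Morph.
End Massey.
Section Transport.
Variables (K : fieldType) (C D : cdga_data K) (f : C -> D) (Hq : is_quasi_iso f).

Lemma Q_fwd (i j m : int) p : Qmas C i j m p -> Qmas D i j m p.
Proof.
case: Hq => HC HD Hf Hsurj Hinj.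
move=> [a [b [c [[ha hb hc hab hbc] Hn]]]].
exists (fun k => f (a k)), (fun k => f (b k)), (f c); split; first split.
- by move=> k; apply: f_cocyc.
- by move=> k; apply: f_cocyc.
- exact: f_cocyc.
- have -> : \sum_k cmul D (f (a k)) (f (b k)) = f (\sum_k cmul C (a k) (b k)).
    by rewrite (f_sum Hf); apply: eq_bigr => k _; rewrite (fmul Hf).
  exact: f_exactd.
- by move=> k; rewrite -(fmul Hf); apply: f_exactd.
move=> [U [V [[hU dU hV dV] [Z [hZ eZ]]]]]; apply: Hn.
case: hab => u0 [hu0 du0].
have [v0 hv0] := fchoice hbc.
have hsU : homog (i + j - 1) (U - f u0) by apply: (homogB HD hU); apply: (fhomog Hf).
have dsU : cd D (U - f u0) = 0.
  rewrite (cdB HD) dU -(fcd Hf) -du0 (f_sum Hf) -sumrB big1 // => k _.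
  by rewrite (fmul Hf) subrr.
have [w [be [hw dw hbe ew]]] := Hsurj _ _ hsU dsU.
have hsV k : homog (j + m - 1) (V k - f (v0 k)).
  by apply: (homogB HD (hV k)); apply: (fhomog Hf); case: (hv0 k).
have dsV k : cd D (V k - f (v0 k)) = 0.
  by rewrite (cdB HD) dV -(fcd Hf); case: (hv0 k) => _ <-; rewrite (fmul Hf) subrr.
have [wb hwb] := fchoice (fun k => Hsurj _ _ (hsV k) (dsV k)).
have [bk hbk] := fchoice hwb.
have hbk1 k : homog (j + m - 1 - 1) (bk k) by case: (hbk k).
have hv01 k : homog (j + m - 1) (v0 k) by case: (hv0 k).
pose u := u0 + w; pose v := fun k => v0 k + wb k.
have hds : defsys i j m a b c u v.
  split.
  - exact: (homogD HC hu0 hw).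
  - by rewrite (cdD HC) dw addr0 du0.
  - by move=> k; apply: (homogD HC); [case: (hv0 k) | case: (hbk k)].
  - move=> k; rewrite (cdD HC); case: (hv0 k) => _ <-.
    by case: (hbk k) => _ -> _ _; rewrite addr0.
exists u, v; split => //.
have [hval dval] := mval_cocyc HC ha hb hc hds.
set s := gsign K i 1.
pose prim := Z + s *: \sum_k cmul D (f (a k)) (bk k) - s *: cmul D be (f c).
have hprim : homog (i + j + m - 1 - 1) prim.
  apply: (homogB HD); first apply: (homogD HD hZ).
    apply: (homogZ HD); apply: (homog_sum HD) => k.
    refine (homogM' HD (fhomog Hf (proj1 (ha k))) (hbk1 k) _); ring.
  apply: (homogZ HD); refine (homogM' HD hbe (fhomog Hf (proj1 hc)) _); ring.
have eu : f u = U + cd D be.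
  rewrite /u (fD Hf) -ew; exact: zid4.
have ev k : f (v k) = V k + cd D (bk k).
  rewrite /v (fD Hf); case: (hbk k) => _ _ _ <-; exact: zid4.
have efval : f (mval i a c u v) = cd D prim.
  rewrite (f_mval Hf) /prim (cdB HD) (cdD HD) !(cdZ HD) (cd_sum HD) -eZ.
  have hfa k := f_cocyc Hf (ha k); have hfc := f_cocyc Hf hc.
  rewrite eu /mval.
  have -> : \sum_k cmul D (f (a k)) (f (v k)) =
      \sum_k cmul D (f (a k)) (V k) + \sum_k cmul D (f (a k)) (cd D (bk k)).
    by rewrite -big_split; apply: eq_bigr => k _; rewrite ev (cmulDr HD).
  have -> : \sum_k cd D (cmul D (f (a k)) (bk k)) =
      s *: \sum_k cmul D (f (a k)) (cd D (bk k)).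
    rewrite scaler_sumr; apply: eq_bigr => k _.
    by rewrite (leibniz HD _ (proj1 (hfa k))) (proj2 (hfa k)) (cmul0l HD) add0r.
  rewrite (leibniz HD _ hbe) (proj2 hfc) (cmul0r HD) scaler0 addr0.
  rewrite scalerA /s gsign_sq scale1r (cmulDl HD) scalerDr.
  exact: zid5.
have [a' [ha' ea']] := Hinj _ _ _ hval dval hprim efval.
by exists a'.
Qed.

Lemma lift_cocyc (i : int) p (a : 'I_p -> D) : (forall k, cocyc i (a k)) ->
  exists (a' : 'I_p -> C) (al : 'I_p -> D), forall k,
    [/\ cocyc i (a' k), homog (i - 1) (al k) & f (a' k) = a k + cd D (al k)].
Proof.
case: Hq => HC HD Hf Hsurj Hinj ha.
have [a' ha'] := fchoice (fun k => Hsurj _ _ (proj1 (ha k)) (proj2 (ha k))).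
have [al hal] := fchoice ha'.
exists a', al => k; case: (hal k) => h1 h2 h3 h4; split => //.
by rewrite -h4 addrC subrK.
Qed.

Lemma exact_lift (p : int) (q : int) (x0 y0 : D) (x y : C) (al be : D) :
  cocyc p x -> cocyc q y -> homog p x0 -> cd D x0 = 0 -> homog q y0 -> cd D y0 = 0 ->
  homog (p - 1) al -> homog (q - 1) be ->
  f x = x0 + cd D al -> f y = y0 + cd D be ->
  exactd (p + q) (cmul D x0 y0) -> exactd (p + q) (cmul C x y).
Proof.
case: Hq => HC HD Hf Hsurj Hinj.
move=> [hx dx] [hy dy] hx0 dx0 hy0 dy0 hal hbe ex ey [z [hz ez]].
have hxy : homog (p + q) (cmul C x y) by apply: (homogM HC hx hy).
have dxy : cd C (cmul C x y) = 0.
  by rewrite (leibniz HC _ hx) dx dy (cmul0l HC) (cmul0r HC) scaler0 addr0.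
pose prim := z + (cmul D al (y0 + cd D be) + gsign K p 1 *: cmul D x0 be).
have hprim : homog (p + q - 1) prim.
  apply: (homogD HD hz); apply: (homogD HD).
    refine (homogM' HD hal (homogD HD hy0 (homog_eq (subrK 1 q) (cd_homog HD hbe))) _); ring.
  apply: (homogZ HD); refine (homogM' HD hx0 hbe _); ring.
have efp : f (cmul C x y) = cd D prim.
  by rewrite (fmul Hf) ex ey (prod_rep HD be hx0 dx0 hal dy0) ez /prim !(cdD HD).
have [w [hw ew]] := Hinj _ _ _ hxy dxy hprim efp.
by exists w.
Qed.

Lemma exact_lift_sum (p q : int) n (x0 y0 : 'I_n -> D) (x y : 'I_n -> C) (al be : 'I_n -> D) :
  (forall k, cocyc p (x k)) -> (forall k, cocyc q (y k)) ->
  (forall k, cocyc p (x0 k)) -> (forall k, cocyc q (y0 k)) ->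
  (forall k, homog (p - 1) (al k)) -> (forall k, homog (q - 1) (be k)) ->
  (forall k, f (x k) = x0 k + cd D (al k)) -> (forall k, f (y k) = y0 k + cd D (be k)) ->
  exactd (p + q) (\sum_k cmul D (x0 k) (y0 k)) -> exactd (p + q) (\sum_k cmul C (x k) (y k)).
Proof.
case: Hq => HC HD Hf Hsurj Hinj.
move=> hx hy hx0 hy0 hal hbe ex ey [z [hz ez]].
have hxy : homog (p + q) (\sum_k cmul C (x k) (y k)).
  by apply: (homog_sum HC) => k; apply: (homogM HC (proj1 (hx k)) (proj1 (hy k))).
have dxy : cd C (\sum_k cmul C (x k) (y k)) = 0.
  rewrite (cd_sum HC); apply: big1 => k _.
  by rewrite (leibniz HC _ (proj1 (hx k))) (proj2 (hx k)) (proj2 (hy k)) (cmul0l HC) (cmul0r HC) scaler0 addr0.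
pose prim := z + \sum_k (cmul D (al k) (y0 k + cd D (be k)) + gsign K p 1 *: cmul D (x0 k) (be k)).
have hprim : homog (p + q - 1) prim.
  apply: (homogD HD hz); apply: (homog_sum HD) => k; apply: (homogD HD).
    refine (homogM' HD (hal k) (homogD HD (proj1 (hy0 k)) (homog_eq (subrK 1 q) (cd_homog HD (hbe k)))) _); ring.
  apply: (homogZ HD); refine (homogM' HD (proj1 (hx0 k)) (hbe k) _); ring.
have efp : f (\sum_k cmul C (x k) (y k)) = cd D prim.
  rewrite (f_sum Hf) /prim (cdD HD) -ez (cd_sum HD) -big_split; apply: eq_bigr => k _.
  by rewrite (fmul Hf) ex ey (prod_rep HD (be k) (proj1 (hx0 k)) (proj2 (hx0 k)) (hal k) (proj2 (hy0 k))).
have [w [hw ew]] := Hinj _ _ _ hxy dxy hprim efp.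
by exists w.
Qed.

Lemma Q_bwd (i j m : int) p : Qmas D i j m p -> Qmas C i j m p.
Proof.
move=> [a [b [c [[ha hb hc hab hbc] Hn]]]].
have [a' [al hal]] := lift_cocyc ha.
have [b' [be hbe]] := lift_cocyc hb.
have [c' [ga hga]] := lift_cocyc (p := 1) (a := fun _ => c) (fun _ => hc).
case: Hq => HC HD Hf Hsurj Hinj.
set c1 := c' ord0; set g1 := ga ord0.
have [hc1 hg1 ec1] := hga ord0; rewrite /= in ec1.
exists a', b', c1; split; first split.
- by move=> k; case: (hal k).
- by move=> k; case: (hbe k).
- done.
- have hal1 k : cocyc i (a' k) by case: (hal k).
  have hal2 k : homog (i - 1) (al k) by case: (hal k).
  have hal3 k : f (a' k) = a k + cd D (al k) by case: (hal k).
  have hbe1 k : cocyc j (b' k) by case: (hbe k).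
  have hbe2 k : homog (j - 1) (be k) by case: (hbe k).
  have hbe3 k : f (b' k) = b k + cd D (be k) by case: (hbe k).
  exact: (exact_lift_sum hal1 hbe1 ha hb hal2 hbe2 hal3 hbe3 hab).
- move=> k; have [hb1 hb2 hb3] := hbe k.
  apply: (exact_lift hb1 hc1 (proj1 (hb k)) (proj2 (hb k)) (proj1 hc) (proj2 hc) hb2 hg1 hb3 ec1).
  exact: hbc.
move=> [u [v [hds [z [hz ez]]]]]; apply: Hn.
apply: (rc HD ha hb hc (al := al) (be := be) (ga := g1)).
- by move=> k; case: (hal k).
- by move=> k; case: (hbe k).
- done.
have Ea : (fun k => a k + cd D (al k)) = (fun k => f (a' k)).
  by apply: functional_extensionality => k; case: (hal k).
have Eb : (fun k => b k + cd D (be k)) = (fun k => f (b' k)).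
  by apply: functional_extensionality => k; case: (hbe k).
rewrite Ea Eb -ec1.
exists (f u), (fun k => f (v k)); split; first exact: (f_defsys Hf hds).
by rewrite -(f_mval Hf); apply: f_exactd Hf _ _ _; exists z.
Qed.
End Transport.
Lemma zz_Q (K : fieldType) (X Y : cdga_data K) (i j m : int) p :
  zigzag X Y -> Qmas X i j m p -> Qmas Y i j m p.
Proof.
elim=> [//|A B C f Hf _ IH|A B C f Hf _ IH] HQ; apply: IH.
  exact: (Q_fwd Hf).
exact: (Q_bwd Hf).
Qed.

Lemma Q_zero (K : fieldType) (H : cdga_data K) (i j m : int) p :
  is_cdga H -> (forall x, cd H x = 0) -> ~ Qmas H i j m p.
Proof.
move=> HH dH [a [b [c [[ha hb hc [z [_ hab]] hbc] Hn]]]]; apply: Hn.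
exists 0, (fun _ => 0); split; first split.
- exact: homog0.
- by rewrite hab !dH.
- by move=> k; apply: homog0.
- by move=> k; case: (hbc k) => z' [_ ->]; rewrite !dH.
exists 0; split; first exact: homog0.
rewrite /mval (cmul0l HH) scaler0 subr0 dH; apply: big1 => k _; exact: (cmul0r HH).
Qed.

Section At.
Variables (K : fieldType) (A : cdga_data K) (n : nat) (omega : A).
Variables (HA : is_cdga A) (dA : forall x, cd A x = 0).
Local Notation At := (Atheta_data A n omega).

Lemma At_sum (I : Type) (r : seq I) (P : pred I) (F : I -> At) :
  (\sum_(k <- r | P k) F k) = ((\sum_(k <- r | P k) (F k).1), (\sum_(k <- r | P k) (F k).2)) :> At.
Proof.
elim/big_rec3: _ => //= k x y z _ ->; done.
Qed.

Lemma At_cd (x y : A) : cd At (x, y) = (cmul A omega y, 0) :> At.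
Proof. by rewrite /= !dA add0r oppr0. Qed.

Lemma At_homog (k : int) (x y : A) :
  homog k x -> homog (k - ((2 * n)%:Z - 1)) y -> homog k ((x, y) : At).
Proof. by rewrite /homog /= => -> ->. Qed.

Lemma At_homog2 (k : int) (u : At) : homog k u -> homog (k - ((2 * n)%:Z - 1)) u.2.
Proof. by case: u => x y; rewrite /homog /= => -[]. Qed.
End At.
Unset Implicit Arguments.
Theorem lemma3p7 (K : fieldType) (charK0 : [pchar K] =i pred0)
  (A : cdga_data K) (n : nat) (alpha : A -> K) (omega : A) :
  is_cdga A ->
  (forall x : A, cd A x = 0) ->
  poincare A (2 * n)%:Z alpha ->
  homog (2 * n)%:Z omega -> alpha omega = 1 ->
  (forall (i : int) (x : A), (i < 0) || odd `|i|%N -> proj A i x = 0) ->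
  (forall x : A, homog 0 x -> exists c : K, x = c *: cone A) ->
  formal (Atheta_data A n omega) ->
  forall i j : nat, (i <= n)%N -> (j <= n)%N ->
    mul_tensor_injective A i%:Z j%:Z.
Proof.
move=> HA dA PA homega aomega vanA A0 [H [HH dH zz]] i j hi hj p q e f he hf M HM.
case: PA => _ alin Pd.
have al0 : alpha 0 = 0.
  have := alin 1 0 0; rewrite ?mul1r ?scale1r addr0 ?mul1r => /(congr1 (fun t => t - alpha 0)).
  by rewrite subrr addrK => <-.
have alZ a x : alpha (a *: x) = a * alpha x by rewrite -[a *: x]addr0 alin al0 addr0.
have alB x y : alpha (x - y) = alpha x - alpha y.
  by rewrite -scaleN1r addrC alin mulN1r addrC.
have [cone_l cone_r] : (forall x, cmul A (cone A) x = x) /\ (forall x, cmul A x (cone A) = x).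
  by case: HA => _ [_ _ H1 _ _] _; split => x; case: (H1 x).
have hcone : homog 0 (cone A) by case: HA => _ [].
have top x : homog (2 * n)%:Z x -> x = alpha x *: omega.
  move=> hx; apply/eqP; rewrite -subr_eq0; apply/eqP.
  apply: (proj1 (Pd (2 * n)%:Z)); first exact: (homogB HA hx (homogZ HA _ homega)).
  move=> y hy; have [c ->] := A0 y (homog_eq (subrr _) hy).
  by rewrite (cmulZr HA) cone_r alZ alB alZ aomega mulr1 subrr mulr0.
apply/matrixP => k0 l0; rewrite mxE.
case: (eqVneq (M k0 l0) 0) => // nz; exfalso.
pose bk k := \sum_l M k l *: f l.
have hbk k : homog j%:Z (bk k).
  apply: (homog_sum HA) => l; apply: (homogZ HA); by case: hf.
have bk0 : bk k0 != 0.
  apply/eqP => h0; case: hf => _ hind _; move: (hind (fun l => M k0 l) h0 l0).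
  by apply/eqP.
have [g [hg ng]] : exists g, homog ((2 * n)%:Z - j%:Z) g /\ alpha (cmul A (bk k0) g) != 0.
  apply: NNPP => Hn; apply: (negP bk0); apply/eqP.
  apply: (proj1 (Pd j%:Z) _ (hbk k0)) => y hy.
  apply/eqP; apply: contraT => hy'; exfalso; apply: Hn; exists y; split => //.
have hsum0 : \sum_k cmul A (e k) (bk k) = 0.
  rewrite -[in RHS]HM; apply: eq_bigr => k _; rewrite (cmul_sumr HA); apply: eq_bigr => l _.
  exact: (cmulZr HA).
have he1 k : homog i%:Z (e k) by case: he.
have Qt : Qmas (Atheta_data A n omega) i%:Z j%:Z ((2 * n)%:Z - j%:Z) p.
  exists (fun k => (e k, 0) : Atheta_data A n omega),
         (fun k => (bk k, 0) : Atheta_data A n omega), ((g, 0) : Atheta_data A n omega).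
  split; first split.
  - move=> k; split; first by apply: (At_homog omega) => //; exact: (homog0 HA).
    by rewrite (At_cd n omega dA) (cmul0r HA).
  - move=> k; split; first by apply: (At_homog omega) => //; exact: (homog0 HA).
    by rewrite (At_cd n omega dA) (cmul0r HA).
  - split; first by apply: (At_homog omega) => //; exact: (homog0 HA).
    by rewrite (At_cd n omega dA) (cmul0r HA).
  - exists (0 : Atheta_data A n omega); split.
      by apply: (At_homog omega); exact: (homog0 HA).
    rewrite At_sum (At_cd n omega dA) (cmul0r HA) /=; congr (_, _) => //.
    by apply: big1 => k _; rewrite (cmul0r HA) (cmul0l HA) addr0.
  - move=> k; exists ((0, alpha (cmul A (bk k) g) *: cone A) : Atheta_data A n omega).
    split.
      apply: (At_homog omega); first exact: (homog0 HA).
      apply: (homogZ HA); apply: homog_eq hcone; lia.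
    rewrite (At_cd n omega dA) /= (cmul0r HA) (cmul0l HA) addr0 (cmulZr HA) cone_r; congr (_, _).
    apply: top; apply: homog_eq (homogM HA (hbk k) hg); lia.
  move=> [U [V [[hU dU hV dV] [z [hz ez]]]]].
  have U20 : U.2 = 0.
    have hU2 := At_homog2 hU.
    case: (ltnP (i + j) (2 * n)) => hij.
    - rewrite -hU2; apply: vanA; apply/orP; left; lia.
    - have h0 : homog 0 U.2 by apply: homog_eq hU2; lia.
      have [c hc] := A0 _ h0.
      have d1 := congr1 fst dU; rewrite At_sum /= dA add0r hc (cmulZr HA) cone_r hsum0 in d1.
      have := congr1 alpha d1; rewrite alZ aomega mulr1 al0 => c0.
      by rewrite hc c0 scale0r.
  pose mu k := alpha (cmul A omega (V k).2).
  have hV2 k : (V k).2 = mu k *: cone A.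
    have h0 : homog 0 (V k).2 by apply: homog_eq (At_homog2 (hV k)); lia.
    have [c hc] := A0 _ h0.
    by rewrite /mu hc (cmulZr HA) cone_r alZ aomega mulr1.
  have hmu0 : mu k0 != 0.
    have d1 := congr1 fst (dV k0); rewrite /= dA add0r in d1.
    by rewrite /mu d1.
  have e2 := congr1 snd ez; rewrite /mval At_sum /= in e2.
  move: e2; rewrite dA oppr0 (cmul0r HA) U20 (cmul0l HA) addr0 scaler0 subr0 => e2.
  have e3 : \sum_k mu k *: e k = 0.
    rewrite -[in RHS]e2; apply: eq_bigr => k _.
    by rewrite (cmul0l HA) addr0 hV2 (cmulZr HA) cone_r.
  case: he => _ hind _; move/eqP: hmu0; apply; exact: hind mu e3 k0.
exact: (Q_zero HH dH (zz_Q zz Qt)).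
Qed.
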